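(* Let $\flat\in\{>,<\}$. For $\imath\in\{1,\dots,2n-1\}$ set $\Xi_\imath=\max\{r\in\frac12\mathbb Z\mid(\imath,r)\in\widehat I^{\mathrm{tw},\flat}_\xi\}$. Then: - $\Xi_\imath=\xi(\imath)$ if $1\le\imath\le n-1$; - $\Xi_n=\frac12(\xi(n-1)+\xi(n))+1$ if $\flat={>}$; - $\Xi_n=\frac12(\xi(n-1)+\xi(n))$ if $\flat={<}$; - $\Xi_\imath=\xi(\imath-1)$ if $n+1\le\imath\le 2n-1$.
   Context: Fix $n\ge2$. Let $\mathcal Q$ be a quiver whose underlying graph is the Dynkin diagram of type $\mathrm A_{2n-2}$ (vertices $1,\dots,2n-2$, edges $\{i,i+1\}$), and let $\xi:\{1,\dots,2n-2\}\to\mathbb Z$ be a height function: $\xi(j)=\xi(i)+1$ whenever there is an arrow $i\to j$. Let $\widehat I_\xi=\{(i,p):1\le i\le 2n-2,\ p\equiv\xi(i)\ (\mathrm{mod}\ 2),\ \xi(2n-1-i)-(2n-1)<p\le\xi(i)\}$. For $\flat\in\{>,<\}$, $\widehat I^{\mathrm{tw},\flat}_\xi\subset\{1,\dots,2n-1\}\times\frac12\mathbb Z$ is the union of: - $\{(i,p)\in\widehat I_\xi: i\le n-1\}$; - $\{(i+1,p):(i,p)\in\widehat I_\xi,\ i\ge n\}$; - the points $(n,p-\frac12)$ for which $\{(n-1,p-1),(n,p)\}\subset\widehat I_\xi$ or $\{(n,p-1),(n-1,p)\}\subset\widehat I_\xi$; - the point $(n,r_M+\frac12)$ if $\flat={>}$,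 resp. $(n,r_m-\frac12)$ if $\flat={<}$, where $r_M$, resp. $r_m$, is the maximum, resp. minimum, of $\{p:(n-1,p)\in\widehat I_\xi\text{ or }(n,p)\in\widehat I_\xi\}$. *)

(* Defs.v *)
(* nat indices, int heights, rat for (1/2)Z coordinates. *)
From HB Require Import structures.
From mathcomp Require Import all_boot all_order all_algebra.
Set Implicit Arguments. Unset Strict Implicit. Unset Printing Implicit Defensive.
Import Order.TTheory GRing.Theory Num.Theory.
Local Open Scope ring_scope.

(* A quiver with underlying graph the Dynkin diagram A_(2n-2): the orientation
   of edge {i,i+1} (1 <= i <= 2n-3) is given by [arr i]:
   arr i = true  means the arrow i -> i+1,
   arr i = false means the arrow i+1 -> i. *)

Definition height_function (n : nat) (arr : nat -> bool) (xi : nat -> int) : Prop :=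
  forall i : nat, (1 <= i)%N -> (i <= 2 * n - 3)%N ->
    if arr i then xi i.+1 = xi i + 1 else xi i = xi i.+1 + 1.

Definition Ihat (n : nat) (xi : nat -> int) (i : nat) (p : int) : Prop :=
  [/\ (1 <= i)%N, (i <= 2 * n - 2)%N,
      (2 %| p - xi i)%Z,
      xi (2 * n - 1 - i)%N - (2 * n - 1)%:Z < p & p <= xi i].

Inductive flat := FGt | FLt.

Definition is_max (S : rat -> Prop) (m : rat) : Prop :=
  S m /\ forall r, S r -> r <= m.
Definition is_min (S : rat -> Prop) (m : rat) : Prop :=
  S m /\ forall r, S r -> m <= r.

Definition Rset (n : nat) (xi : nat -> int) (r : rat) : Prop :=
  exists p : int, r = p%:~R /\ (Ihat n xi (n - 1)%N p \/ Ihat n xi n p).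

Definition Itw (n : nat) (xi : nat -> int) (fl : flat) (i : nat) (r : rat) : Prop :=
  [\/ (i <= n - 1)%N /\ (exists p : int, r = p%:~R /\ Ihat n xi i p),
      (exists i' : nat, [/\ (n <= i')%N, i = i'.+1 &
                           exists p : int, r = p%:~R /\ Ihat n xi i' p]),
      i = n /\ (exists p : int, r = p%:~R - 1 / 2 /\
                 ((Ihat n xi (n - 1)%N (p - 1) /\ Ihat n xi n p) \/
                  (Ihat n xi n (p - 1) /\ Ihat n xi (n - 1)%N p)))
    | i = n /\ (match fl with
                | FGt => exists rM, is_max (Rset n xi) rM /\ r = rM + 1 / 2
                | FLt => exists rm, is_min (Rset n xi) rm /\ r = rm - 1 / 2
                end)].

(* Main.v *)
Require Import Defs.
From HB Require Import structures.
From mathcomp Require Import all_boot all_order all_algebra.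
From mathcomp Require Import zify ring lra.
Import Order.TTheory GRing.Theory Num.Theory.
Local Open Scope ring_scope.

Lemma lip_aux n arr xi : height_function n arr xi -> forall d i, (1 <= i)%N ->
  (i + d <= 2 * n - 2)%N ->
  (xi (i + d)%N - xi i <= d%:Z) /\ (xi i - xi (i + d)%N <= d%:Z).
Proof.
move=> h; elim=> [|d IH] i h1 h2.
  by rewrite addn0 subrr; split.
rewrite addnS in h2 *.
have [IH1 IH2] := IH i h1 (ltnW h2).
have H1 : (1 <= i + d)%N by lia.
have H2 : (i + d <= 2 * n - 3)%N by lia.
have := h (i + d)%N H1 H2.
by case: (arr (i + d)%N) => e; split; lia.
Qed.

Lemma bnd_aux n arr xi : height_function n arr xi -> forall i j, (1 <= i)%N ->
  (i <= 2 * n - 2)%N -> (1 <= j)%N -> (j <= 2 * n - 2)%N ->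
  xi j - xi i <= (2 * n - 3)%N%:Z.
Proof.
move=> h i j h1 h2 h3 h4.
case: (leqP i j) => hij.
  have e : j = (i + (j - i))%N by lia.
  have [A _] := @lip_aux n arr xi h (j - i) i h1 ltac:(lia).
  rewrite {1}e; lia.
have e : i = (j + (i - j))%N by lia.
have [_ A] := @lip_aux n arr xi h (i - j) j h3 ltac:(lia).
rewrite e; lia.
Qed.

Theorem lemma3p23 (n : nat) (hn : (2 <= n)%N) (arr : nat -> bool)
  (xi : nat -> int) (hxi : height_function n arr xi) (fl : flat) :
  (forall i : nat, (1 <= i)%N -> (i <= n - 1)%N ->
     is_max (Itw n xi fl i) (xi i)%:~R) /\
  (fl = FGt -> is_max (Itw n xi fl n) (((xi (n - 1)%N)%:~R + (xi n)%:~R) / 2 + 1)) /\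
  (fl = FLt -> is_max (Itw n xi fl n) (((xi (n - 1)%N)%:~R + (xi n)%:~R) / 2)) /\
  (forall i : nat, (n + 1 <= i)%N -> (i <= 2 * n - 1)%N ->
     is_max (Itw n xi fl i) (xi (i - 1)%N)%:~R).
Proof.
have Hmem : forall i, (1 <= i)%N -> (i <= 2 * n - 2)%N -> Ihat n xi i (xi i).
  move=> i h1 h2; split => //; first by rewrite subrr dvdz0.
  have := @bnd_aux n arr xi hxi i (2 * n - 1 - i)%N h1 h2 (_ : (1 <= 2 * n - 1 - i)%N) (_ : (2 * n - 1 - i <= 2 * n - 2)%N).
  move=> H; have {}H := H ltac:(lia) ltac:(lia); lia.
have Hle : forall i p, Ihat n xi i p -> p <= xi i by move=> i p [].
have lerat : forall x y : int, x <= y -> (x%:~R : rat) <= y%:~R.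
  by move=> x y; rewrite ler_int.
set a := xi (n - 1)%N; set b := xi n.
have hab : b = a + 1 \/ a = b + 1.
  have := hxi (n - 1)%N ltac:(lia) ltac:(lia).
  rewrite (_ : (n - 1).+1 = n)%N; last by lia.
  by rewrite -/a -/b; case: (arr (n - 1)%N) => e; [left|right].
have habq : (b%:~R : rat) = a%:~R + 1 \/ (a%:~R : rat) = b%:~R + 1.
  by case: hab => ->; [left|right]; rewrite intrD.
have Ra : Ihat n xi (n - 1)%N a by apply: Hmem; lia.
have Rb : Ihat n xi n b by apply: Hmem; lia.
have C3 : forall r : rat, (exists p : int, r = p%:~R - 1 / 2 /\
                 ((Ihat n xi (n - 1)%N (p - 1) /\ Ihat n xi n p) \/
                  (Ihat n xi n (p - 1) /\ Ihat n xi (n - 1)%N p))) ->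
          r <= (a%:~R + b%:~R) / 2.
  move=> r [p [-> [[H1 H2]|[H1 H2]]]];
  have := lerat _ _ (Hle _ _ H1); have := lerat _ _ (Hle _ _ H2);
  rewrite -/a -/b; case: habq => e; lra.
have CR : forall r, Rset n xi r -> r <= (a%:~R + b%:~R) / 2 + 1 / 2.
  move=> r [p [-> [H|H]]]; have := lerat _ _ (Hle _ _ H);
  rewrite -/a -/b; case: habq => e; lra.
split.
  move=> i h1 h2; split.
    by apply: Or41; split => //; exists (xi i); split => //; apply: Hmem; lia.
  move=> r [[_ [p [-> Hp]]] | [i' [h3 h4 _]] | [h3 _] | [h3 _]].
  - exact: lerat (Hle _ _ Hp).
  - lia.
  - lia.
  - lia.
split.
  move=> hfl; subst fl; split.
    apply: Or44; split => //; exists ((a%:~R + b%:~R) / 2 + 1 / 2); split; last by lra.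
    split => //.
    case: hab => e.
      by exists b; split; [rewrite e intrD; lra | right].
    by exists a; split; [rewrite e intrD; lra | left].
  move=> r [[h3 _] | [i' [h3 h4 _]] | [_ H] | [_ [rM [[HrM _] ->]]]].
  - lia.
  - lia.
  - have := C3 _ H; lra.
  - have := CR _ HrM; lra.
split.
  move=> hfl; subst fl; split.
    apply: Or43; split => //.
    case: hab => e.
      exists b; split; first by rewrite e intrD; lra.
      by left; split => //; rewrite e addrK.
    exists a; split; first by rewrite e intrD; lra.
    by right; split => //; rewrite e addrK.
  move=> r [[h3 _] | [i' [h3 h4 _]] | [_ H] | [_ [rm [[Hrm _] ->]]]].
  - lia.
  - lia.
  - exact: C3.
  - have := CR _ Hrm; lra.
move=> i h1 h2; split.
  apply: Or42; exists (i - 1)%N; split; [lia | lia |].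
  by exists (xi (i - 1)%N); split => //; apply: Hmem; lia.
move=> r [[h3 _] | [i' [h3 h4 [p [-> Hp]]]] | [h3 _] | [h3 _]].
- lia.
- rewrite (_ : (i - 1 = i')%N); last by lia.
  exact: lerat (Hle _ _ Hp).
- lia.
- lia.
Qed.
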